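(* Let $K\ge1$, $p_D\in(0,1]$, $p^+\in(0,1)$, and let $\varphi^\pm=(\varphi^\pm_y)_{y\in[K]}$ be fixed probability vectors with $\varphi^-_y>0$ for all $y$. For unknowns $(q_y,q_y^+)_y$ define \[ \Delta\mathrm{s.p.}(\hat y)=\frac{p_D}{p^+(1-p^+)}\Bigl(\varphi^+_{\hat y}(p^+-q^+)-(q_{\hat y}p^+-q^+_{\hat y})\Bigr)+(\varphi^+_{\hat y}-\varphi^-_{\hat y})\Bigl(1-p_D\frac{1-q^+}{1-p^+}\Bigr),\quad q^+=\sum_yq_y^+. \] If $p_D\ge(1-p^+)\max_y\frac{\varphi^-_y-\varphi^+_y}{\varphi^-_y}$, then there exist $(q_y,q_y^+)_y$ with $\sum_yq_y=1$ and $0\le q_y^+\le q_y$ for all $y$ such that $\Delta\mathrm{s.p.}(\hat y)=0$ for all $\hat y\in[K]$.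
   Context: Interpretation: $p_D=\mathbb{P}(D=1)$ is the memorized mass, $p^+=\mathbb{P}(A=1)$, $q_y=\mathbb{P}(Y=y\mid D=1)$, $q^+_y=\mathbb{P}(Y=y,A=1\mid D=1)$, $\varphi^\pm_y$ the prediction rates of the base classifier on the unmemorized part in group $A=1$ resp. $A=0$; the formula is the statistical parity gap of the memorizing classifier, with $\varphi^\pm$ treated as fixed parameters. *)

(* Defs.v *)
From mathcomp Require Import all_boot all_order all_algebra.
Set Implicit Arguments. Unset Strict Implicit. Unset Printing Implicit Defensive.
Import Order.TTheory GRing.Theory Num.Theory.
Local Open Scope ring_scope.

Definition prob_vec (R : realFieldType) (K : nat) (v : 'I_K -> R) : Prop :=
  (forall y, 0 <= v y) /\ \sum_(y < K) v y = 1.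

Definition delta_sp (R : realFieldType) (K : nat) (pD pplus : R)
  (phip phim q qp : 'I_K -> R) (yh : 'I_K) : R :=
  let qplus := \sum_(y < K) qp y in
  pD / (pplus * (1 - pplus)) * (phip yh * (pplus - qplus) - (q yh * pplus - qp yh))
  + (phip yh - phim yh) * (1 - pD * ((1 - qplus) / (1 - pplus))).

(* Main.v *)
Require Import Defs.
From mathcomp Require Import all_boot all_order all_algebra.
From mathcomp Require Import ring lra.
Import Order.TTheory GRing.Theory Num.Theory.
Local Open Scope ring_scope.

Theorem corollary10 (R : realFieldType) (K : nat) (pD pplus : R)
  (phip phim : 'I_K -> R) :
  (1 <= K)%N ->
  0 < pD -> pD <= 1 ->
  0 < pplus -> pplus < 1 ->
  prob_vec phip -> prob_vec phim ->
  (forall y, 0 < phim y) ->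
  (* p_D >= (1 - p^+) * max_y (phim y - phip y) / phim y *)
  (forall y, (1 - pplus) * ((phim y - phip y) / phim y) <= pD) ->
  exists q qp : 'I_K -> R,
    \sum_(y < K) q y = 1 /\
    (forall y, 0 <= qp y /\ qp y <= q y) /\
    (forall yh, delta_sp pD pplus phip phim q qp yh = 0).
Proof.
move=> _ pD0 pD1 a0 a1 [_ Sp] [_ Sm] m0 H.
exists (fun y => phim y - (1 - pplus) * (phim y - phip y) / pD), (fun _ => 0).
split.
  rewrite big_split /= Sm sumrN.
  under eq_bigr do rewrite -mulrA.
  rewrite -mulr_sumr -mulr_suml big_split /= sumrN Sm Sp subrr mul0r mulr0.
  by rewrite subr0.
split.
  move=> y; split => //.
  have := H y; rewrite mulrA ler_pdivrMr // => Hy.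
  rewrite subr_ge0 ler_pdivrMr //; lra.
move=> yh; rewrite /delta_sp big1 //.
have ha : pplus != 0 by rewrite gt_eqF.
have hb : 1 - pplus != 0 by rewrite gt_eqF // subr_gt0.
have hd : pD != 0 by rewrite gt_eqF.
field; rewrite ?ha ?hb ?hd //=.
Qed.
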